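(* Let $d\ge 1$ and let $j\in L^1(\mathbb{R}^d)$ be given by $j(x)=(2\pi)^{-d}\int_{\mathbb{R}^d}e^{ix\cdot t}\,d\rho(t)$ for a finite positive Borel measure $\rho$ on $\mathbb{R}^d$, and let $J$ be the integral operator on $L^2(\mathbb{R}^d)$ with kernel $J(x,y)=j(x-y)$. Let $\Lambda\subset\mathbb{R}^d$ be a bounded Borel set, let $\zeta_\Lambda\in\Gamma_\Lambda$ and $\xi\in\mathcal{R}_\Lambda$. Then the limit $$H_\Lambda^{(J)}(\zeta_\Lambda;\xi):=\lim_{\Delta\uparrow\mathbb{R}^d}\big[U^{(J)}(\zeta_\Lambda)+W^{(J)}(\zeta_\Lambda;\widehat\xi_{\Delta\setminus\Lambda})\big],$$ taken over bounded Borel sets $\Delta\supset\Lambda$ increasing to $\mathbb{R}^d$, exists (in $\mathbb{R}\cup\{+\infty\}$).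
   Context: Configurations: $\mathcal{N}$ is the space of locally finite integer-valued Radon measures on $\mathbb{R}^d$; $\Gamma\subset\mathcal{N}$ is the set of simple ones, identified with locally finite subsets of $\mathbb{R}^d$. For $\Lambda\subset\mathbb{R}^d$, $\xi_\Lambda=\xi\cap\Lambda$ is the restriction, and $\Gamma_\Lambda$ is the set of simple configurations supported in $\Lambda$ (finite when $\Lambda$ is bounded). For a finite tuple or configuration $\underline x_n=(x_1,\dots,x_n)$, $J(\underline x_n,\underline x_n)$ denotes the matrix $(j(x_i-x_k))_{1\le i,k\le n}$, which is positive semidefinite. Potential: $U^{(J)}(x_1,\dots,x_n):=-\log\det(j(x_i-x_k))_{1\le i,k\le n}$, with $-\log 0:=+\infty$ and $U^{(J)}(\emptyset)=0$. For disjoint finite configurations $\xi_1,\xi_2$, the mutual energy is $W^{(J)}(\xi_1;\xi_2):=U^{(J)}(\xi_1\cup\xi_2)-U^{(J)}(\xi_1)-U^{(J)}(\xi_2)$ if $U^{(J)}(\xi_1\cup\xi_2)<\infty$. In that case $U^{(J)}(\xi_1)$ and $U^{(J)}(\xi_2)$ are finite by Fischer's inequality. Otherwise $W^{(J)}(\xi_1;\xi_2):=+\infty$. Interaction range: $R:=\inf\{R'>0: j(x)=0\text{ whenever }|x|\ge R'\}\in(0,+\infty]$. Boundary particles: if $R=\infty$, $\xi_{\partial\Lambda}:=\xi_{\Lambda^c}$. If $R<\infty$, $\xi_{\partial\Lambda}$ is the set of $x\in\xi_{\Lambda^c}$ for which there exist points $x_{j_1},\dots,x_{j_k}\in\xi_{\Lambda^c}$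 with $x_{j_k}=x$ and a point $x_{j_0}\in\Lambda$ such that $|x_{j_l}-x_{j_{l-1}}|<R$ for $l=1,\dots,k$. For bounded $\Delta$, $\widehat\xi_\Delta:=\xi_\Delta\cap\xi_{\partial\Lambda}$. Possible boundary conditions: $\mathcal{R}_\Lambda:=\{\xi\in\mathcal{N}:\det J(\widehat\xi_\Delta,\widehat\xi_\Delta)\neq0\text{ for all bounded }\Delta\subset\Lambda^c\}$. *)

(* Defs.v *)
From HB Require Import structures.
From mathcomp Require Import all_boot all_order all_algebra.
From mathcomp Require Import all_classical all_reals all_analysis.
From mathcomp Require Import complex.
Set Implicit Arguments. Unset Strict Implicit. Unset Printing Implicit Defensive.
Import Order.TTheory GRing.Theory Num.Theory.
Import numFieldNormedType.Exports.
Local Open Scope classical_set_scope.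
Local Open Scope ring_scope.

Section Defs.
Variables (R : realType) (d : nat).

Notation pt := 'rV[R]_d.
Notation C := (complex.complex R).

Definition dotRd (x t : pt) : R := \sum_(i < d) x 0 i * t 0 i.
Definition enorm (x : pt) : R := Num.sqrt (\sum_(i < d) x 0 i ^+ 2).

Definition borelRd := g_sigma_algebraType (@open pt).
Definition borel_set (A : set pt) : Prop := <<s (@open pt) >> A.

Definition jfun (rho : {measure set borelRd -> \bar R}) (x : pt) : C :=
  complex.Complex ((2 * pi) ^- d * Rintegral rho setT (fun t : borelRd => cos (dotRd x t)))
                  ((2 * pi) ^- d * Rintegral rho setT (fun t : borelRd => sin (dotRd x t))).

Definition cabs (z : C) : R := Num.sqrt (complex.Re z ^+ 2 + complex.Im z ^+ 2).

Definition int_range (j : pt -> C) : \bar R :=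
  ereal_inf [set r%:E | r in [set r : R | 0 < r /\ forall x, r <= enorm x -> j x = 0]].

Definition Jmx (j : pt -> C) (s : seq pt) : 'M[C]_(size s) :=
  \matrix_(i < size s, k < size s) j (nth 0 s i - nth 0 s k).

(* U^{(J)}(x_1..x_n) = - log det J, with -log 0 = +oo; U(empty) = 0 *)
Definition Upot (j : pt -> C) (s : seq pt) : \bar R :=
  let D := complex.Re (\det (Jmx j s)) in
  if 0 < D then (- ln D)%:E else +oo%E.

Definition Wpot (j : pt -> C) (s1 s2 : seq pt) : \bar R :=
  if (Upot j (s1 ++ s2) < +oo)%E
  then (Upot j (s1 ++ s2) - Upot j s1 - Upot j s2)%E else +oo%E.

(* A configuration in N: a multiplicity function with locally finite support *)
Definition supp (xi : pt -> nat) : set pt := [set x | (0 < xi x)%N].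
Definition locally_finite_config (xi : pt -> nat) : Prop :=
  forall B : set pt, bounded_set B -> finite_set (B `&` supp xi).

Definition boundary (j : pt -> C) (Lam : set pt) (xi : pt -> nat) : set pt :=
  if int_range j == +oo%E then supp xi `&` ~` Lam
  else [set x | exists (y0 : pt) (s : seq pt),
          [/\ Lam y0, s != [::], all (fun y => y \in supp xi `&` ~` Lam) s,
              last y0 s = x &
              path (fun a b : pt => ((enorm (b - a))%:E < int_range j)%E) y0 s]].

Definition hat_xi (j : pt -> C) (Lam : set pt) (xi : pt -> nat) (Del : set pt) : seq pt :=
  flatten [seq nseq (xi x) x | x <- finmap.enum_fset (fset_set (Del `&` boundary j Lam xi))].

Definition possible_bc (j : pt -> C) (Lam : set pt) (xi : pt -> nat) : Prop :=
  locally_finite_config xi /\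
  forall Del : set pt, bounded_set Del -> Del `<=` ~` Lam ->
    \det (Jmx j (hat_xi j Lam xi Del)) != 0.

Fixpoint iter_lebesgue (n : nat) : ('rV[R]_n -> \bar R) -> \bar R :=
  match n with
  | 0 => fun g => g 0
  | n'.+1 => fun g => (\int[@lebesgue_measure R]_x
                          iter_lebesgue (fun y : 'rV[R]_n' => g (row_mx (x%:M) y)))%E
  end.

Definition L1_Rd (j : pt -> C) : Prop :=
  (iter_lebesgue (fun x : pt => (cabs (j x))%:E) < +oo)%E.

(* filter of bounded Borel sets Delta \supset Lambda increasing to R^d *)
Definition exhaust_filter (Lam : set pt) : set_system (set pt) :=
  filter_from [set D0 | bounded_set D0 /\ borel_set D0 /\ Lam `<=` D0]
              (fun D0 => [set D | bounded_set D /\ borel_set D /\ D0 `<=` D]).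

End Defs.

(* Main.v *)
Require Import Defs.
From HB Require Import structures.
From mathcomp Require Import all_boot all_order all_algebra.
From mathcomp Require Import all_classical all_reals all_analysis.
From mathcomp Require Import complex.
From mathcomp Require Import ring lra.
From mathcomp Require Import fingroup perm.
From mathcomp Require Import measurable_realfun.
From mathcomp Require finmap.
Set Implicit Arguments. Unset Strict Implicit. Unset Printing Implicit Defensive.
Import Order.TTheory GRing.Theory Num.Theory.
Import numFieldNormedType.Exports.
Local Open Scope classical_set_scope.
Local Open Scope ring_scope.

Section Kern.
Variables (R : rcfType) (T : eqType) (x0 : T).
Notation C := (R[i]).

Definition Kmx (K : T -> T -> C) (s : seq T) : 'M[C]_(size s) :=
  \matrix_(i < size s, k < size s) K (nth x0 s i) (nth x0 s k).

Definition condK (K : T -> T -> C) (z : T) : T -> T -> C :=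
  fun a b => K a b - K a z * K z b / K z z.

Lemma det_cons (K : T -> T -> C) z s : K z z != 0 ->
  \det (Kmx K (z :: s)) = K z z * \det (Kmx (condK K z) s).
Proof.
move=> nz.
pose n := size s.
pose a := K z z.
pose r : 'M[C]_(1, n) := \row_k K z (nth x0 s k).
pose c : 'M[C]_(n, 1) := \col_i K (nth x0 s i) z.
pose Ms : 'M[C]_n := Kmx K s.
have EM : (Kmx K (z :: s) : 'M[C]_(1 + n)) = block_mx (scalar_mx a) r c Ms.
  rewrite -(submxK (Kmx K (z :: s) : 'M[C]_(1 + n))); congr block_mx; apply/matrixP => i j; rewrite !mxE.
  - by rewrite !ord1 /=.
  - by rewrite !ord1 /=.
  - by rewrite !ord1 /=.
  - by [].
pose L : 'M[C]_(1 + n) := block_mx (scalar_mx 1) 0 (- (a^-1) *: c) (scalar_mx 1).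
have dL : \det L = 1 by rewrite /L det_lblock !det1 mulr1.
have : \det (L *m (Kmx K (z :: s) : 'M[C]_(1 + n))) = \det (Kmx K (z :: s)).
  by rewrite det_mulmx dL mul1r.
move=> <-.
rewrite EM /L mulmx_block !mul1mx !mul0mx !addr0.

have -> : - a^-1 *: c *m (scalar_mx a) + c = 0.
  rewrite -scalemxAl mul_mx_scalar scalerA mulNr mulVf // scaleN1r addNr //.
rewrite det_ublock det_scalar1; congr (_ * _); congr (\det _).
apply/matrixP => i j; rewrite !mxE big_ord1 !mxE /condK.
by rewrite /a; field.
Qed.

Lemma detKE (K : T -> T -> C) s n (e : size s = n) :
  \det (Kmx K s) = \det (\matrix_(i < n, k < n) K (nth x0 s i) (nth x0 s k)).
Proof. by subst n. Qed.

Lemma det_permK (K : T -> T -> C) n (f : 'I_n -> T) (p : 'S_n) :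
  \det (\matrix_(i < n, k < n) K (f (p i)) (f (p k))) =
  \det (\matrix_(i < n, k < n) K (f i) (f k)).
Proof.
set A := \matrix_(i < n, k < n) K (f i) (f k).
have -> : \matrix_(i < n, k < n) K (f (p i)) (f (p k)) = row_perm p (col_perm p A).
  by apply/matrixP => i j; rewrite !mxE.
rewrite row_permE col_permE !det_mulmx !det_perm odd_permV mulrA mulrC mulrA.
by rewrite -signr_addb addbb expr0 mul1r.
Qed.

Lemma det_perm_eq (K : T -> T -> C) s s' : perm_eq s s' -> \det (Kmx K s) = \det (Kmx K s').
Proof.
move=> H.
have /tuple_permP [p Hp] : perm_eq s (in_tuple s') by [].
have e : size s = size s' by rewrite (perm_size H).
rewrite (detKE K e) (detKE K (erefl (size s'))).
rewrite -(det_permK K (fun i : 'I_(size s') => nth x0 s' i) p).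
congr (\det _); apply/matrixP => i j; rewrite !mxE.
rewrite Hp.
by rewrite -!tnth_nth !tnth_mktuple !(tnth_nth x0).
Qed.

Definition Qf (K : T -> T -> C) (s : seq T) (c : nat -> C) : C :=
  \sum_(i < size s) \sum_(k < size s) (c i)^* * c k * K (nth x0 s i) (nth x0 s k).
Definition herm (K : T -> T -> C) := forall a b, K b a = (K a b)^*.
Definition psd (K : T -> T -> C) := forall s c, 0 <= Qf K s c.
Definition PK K := herm K /\ psd K.

Lemma ge0_conj (x : C) : 0 <= x -> x^* = x.
Proof. exact: geC0_conj. Qed.

Lemma cM (x y : C) : (x * y)^* = x^* * y^*. Proof. exact: rmorphM. Qed.
Lemma cD (x y : C) : (x + y)^* = x^* + y^*. Proof. exact: rmorphD. Qed.
Lemma cB (x y : C) : (x - y)^* = x^* - y^*. Proof. exact: rmorphB. Qed.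
Lemma cN (x : C) : (- x)^* = - x^*. Proof. exact: rmorphN. Qed.
Lemma cV (x : C) : (x^-1)^* = (x^*)^-1. Proof. exact: fmorphV. Qed.
Lemma cS (I : Type) (r : seq I) (P : pred I) (F : I -> C) :
  (\sum_(i <- r | P i) F i)^* = \sum_(i <- r | P i) (F i)^*.
Proof. exact: rmorph_sum. Qed.

Lemma diag_ge0 (K : T -> T -> C) z : psd K -> 0 <= K z z.
Proof.
move=> /(_ [:: z] (fun _ => 1)); rewrite /Qf /= big_ord1 big_ord1 /=.
by rewrite rmorph1 !mul1r.
Qed.

Lemma zero_diag (K : T -> T -> C) z a : PK K -> K z z = 0 -> K z a = 0.
Proof.
move=> [hK pK] z0.
set w := K z a.
have Kaz : K a z = w^* by rewrite hK.
have Kaa := diag_ge0 a pK.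
apply/eqP; apply/negPn/negP => wn0.
have q0 : 0 < w * w^*.
  by rewrite mul_conjC_gt0.
pose u := (K a a + 1) / (2 * (w * w^*)).
have uc : u^* = u.
  apply: ge0_conj; rewrite /u divr_ge0 // ?addr_ge0 // mulr_ge0 //.
    by rewrite ltW.
pose g := - u * w.
have gc : g^* = - u * w^*.
  by rewrite /g rmorphM rmorphN; congr (- _ * _); exact: uc.
have := pK [:: z; a] (fun i => if i == 0%N then g else 1).
rewrite /Qf /= !big_ord_recr !big_ord0 /= !add0r z0 Kaz -/w rmorph1.
rewrite gc /g mulr0 add0r !mulr1 !mul1r.
have e : 2 * u * (w * w^*) = K a a + 1.
  by rewrite /u; field; rewrite wn0 andbT; apply/negP => /eqP/(congr1 Num.conj);
     rewrite conjCK conjC0; apply/eqP.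
have -> : - u * w^* * w + (- u * w * w^* + K a a) = K a a - 2 * u * (w * w^*).
  by ring.
rewrite e opprD addrA subrr add0r.
by rewrite oppr_ge0 ler10.
Qed.

Lemma cond_herm (K : T -> T -> C) z : herm K -> 0 <= K z z -> herm (condK K z).
Proof.
move=> hK Kz a b; rewrite /condK cB cM cM cV -!hK.
by rewrite [K z a * _]mulrC.
Qed.

Lemma det_zero_row (K : T -> T -> C) s (i : 'I_(size s)) :
  (forall b, K (nth x0 s i) b = 0) -> \det (Kmx K s) = 0.
Proof.
move=> H; rewrite (expand_det_row _ i) big1 // => j _.
by rewrite mxE H mul0r.
Qed.

Lemma cond_psd (K : T -> T -> C) z : PK K -> 0 < K z z -> psd (condK K z).
Proof.
move=> [hK pK] az s c.
set n := size s; set a := K z z.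
set w := \sum_(k < n) c k * K z (nth x0 s k).
have ws : w^* = \sum_(i < n) (c i)^* * K (nth x0 s i) z.
  by rewrite /w cS; apply: eq_bigr => i _; rewrite cM -hK.
have E1 : Qf (condK K z) s c = Qf K s c - w^* * w / a.
  rewrite ws /w mulr_suml mulr_suml /Qf -sumrB; apply: eq_bigr => i _.
  rewrite mulr_sumr mulr_suml -sumrB; apply: eq_bigr => k _.
  rewrite /condK /a; ring.
pose b := - w / a.
pose c' := fun i => if (i < n)%N then c i else b.
have E2 : Qf K (rcons s z) c' = Qf K s c + b * w^* + b^* * w + b^* * b * a.
  rewrite /Qf size_rcons big_ord_recr /=.
  under eq_bigr => i _ do rewrite big_ord_recr /=.
  rewrite big_ord_recr /= -/n.
  have cn : forall i : 'I_n, c' i = c i by move=> i; rewrite /c' ltn_ord.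
  have sn : forall i : 'I_n, nth x0 (rcons s z) i = nth x0 s i.
    by move=> i; rewrite nth_rcons ltn_ord.
  have cNn : c' n = b by rewrite /c' ltnn.
  have sN : nth x0 (rcons s z) n = z by rewrite nth_rcons ltnn eqxx.
  under eq_bigr => i _ do under eq_bigr => k _ do rewrite cn cn sn sn.
  under eq_bigr => i _ do rewrite cn sn.
  under [X in _ + (X + _)]eq_bigr => i _ do rewrite cn sn.
  rewrite cNn sN.
  have S1 : \sum_(i < n) (c i)^* * b * K (nth x0 s i) z = b * w^*.
    by rewrite ws mulr_sumr; apply: eq_bigr => i _; ring.
  have S2 : \sum_(i < n) b^* * c i * K z (nth x0 s i) = b^* * w.
    by rewrite /w mulr_sumr; apply: eq_bigr => i _; ring.
  rewrite big_split /= S1 S2 /a; ring.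
have ac : a^* = a by apply: geC0_conj; apply: ltW.
have bc : b^* = - w^* / a by rewrite /b cM cN cV ac.
rewrite E1.
have := pK (rcons s z) c'; rewrite E2 bc /b.
suff -> : Qf K s c + - w / a * w^* + - w^* / a * w + - w^* / a * (- w / a) * a =
   Qf K s c - w^* * w / a by [].
by field; rewrite gt_eqF.
Qed.

Lemma PK_cond (K : T -> T -> C) z : PK K -> K z z != 0 -> PK (condK K z).
Proof.
move=> hK nz; have az : 0 < K z z by rewrite lt_def nz diag_ge0 //; case: hK.
split; [apply: cond_herm; [by case: hK| exact: ltW] | exact: cond_psd].
Qed.

Lemma Kmx0 (K : T -> T -> C) : \det (Kmx K [::]) = 1.
Proof. exact: det_mx00. Qed.

Lemma Kmx1 (K : T -> T -> C) y : \det (Kmx K [:: y]) = K y y.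
Proof. by rewrite det_mx11 mxE. Qed.

Lemma det_ge0 s : forall (K : T -> T -> C), PK K -> 0 <= \det (Kmx K s).
Proof.
elim: s => [|z s IH] K hK; first by rewrite Kmx0.
case: (eqVneq (K z z) 0) => [z0|nz].
  by rewrite (@det_zero_row K (z :: s) ord0) //= => b; exact: zero_diag.
rewrite det_cons // mulr_ge0 ?IH //; [apply: diag_ge0; by case: hK | exact: PK_cond].
Qed.

Lemma had s : forall (K : T -> T -> C) y, PK K ->
  \det (Kmx K (y :: s)) <= K y y * \det (Kmx K s).
Proof.
elim: s => [|z s IH] K y hK; first by rewrite Kmx1 Kmx0 mulr1.
case: (eqVneq (K z z) 0) => [z0|nz].
  rewrite (@det_zero_row K (y :: z :: s) (@Ordinal (size (y :: z :: s)) 1 isT)) /=; last first.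
    by move=> b; exact: zero_diag.
  by rewrite (@det_zero_row K (z :: s) ord0) /= ?mulr0 // => b; exact: zero_diag.
have hz : PK (condK K z) by apply: PK_cond.
have az : 0 <= K z z by apply: diag_ge0; case: hK.
rewrite (@det_perm_eq K (y :: z :: s) (z :: y :: s)); last by rewrite (perm_catCA [:: y] [:: z] s (z :: y :: s)) perm_refl.
rewrite (@det_cons K z (y :: s) nz) (@det_cons K z s nz) mulrCA; apply: ler_wpM2l => //.
apply: le_trans (IH _ y hz) _; apply: ler_wpM2r; first exact: det_ge0.
rewrite /condK lerBlDr lerDl; case: hK => hK _.
by rewrite [K z y]hK divr_ge0 ?mul_conjC_ge0.
Qed.

Lemma had_step (K : T -> T -> C) y s : PK K -> K y y != 0 ->
  \det (Kmx (condK K y) s) <= \det (Kmx K s).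
Proof.
move=> hK nz; have := had s y hK; rewrite det_cons //.
have az : 0 < K y y by rewrite lt_def nz diag_ge0 //; case: hK.
by rewrite ler_pM2l.
Qed.

Definition condL (K : T -> T -> C) (xs : seq T) := foldl condK K xs.

Lemma det_cat xs : forall (K : T -> T -> C) s, PK K -> \det (Kmx K xs) != 0 ->
  \det (Kmx K (xs ++ s)) = \det (Kmx K xs) * \det (Kmx (condL K xs) s)
  /\ PK (condL K xs) /\ \det (Kmx (condL K xs) s) = \det (Kmx K (xs ++ s)) / \det (Kmx K xs).
Proof.
elim: xs => [|y xs IH] K s hK nz.
  by rewrite Kmx0 mul1r divr1.
have nzy : K y y != 0.
  apply/negP => /eqP y0; move: nz.
  by rewrite (@det_zero_row K (y :: xs) ord0) ?eqxx // => b; apply: zero_diag.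
have nzr : \det (Kmx (condK K y) xs) != 0.
  by move: nz; rewrite det_cons // mulf_eq0 (negbTE nzy).
have [E [P _]] := IH (condK K y) s (PK_cond hK nzy) nzr.
have E' : \det (Kmx K ((y :: xs) ++ s)) = \det (Kmx K (y :: xs)) * \det (Kmx (condL K (y :: xs)) s).
  by rewrite cat_cons det_cons // E det_cons // mulrA.
split => //; split => //.
by rewrite E'; field.
Qed.

Lemma mono_cond eta : forall (K : T -> T -> C) s, PK K -> \det (Kmx K eta) != 0 ->
  \det (Kmx (condL K eta) s) <= \det (Kmx K s).
Proof.
elim: eta => [|y eta IH] K s hK nz //.
have nzy : K y y != 0.
  apply/negP => /eqP y0; move: nz.
  by rewrite (@det_zero_row K (y :: eta) ord0) ?eqxx // => b; apply: zero_diag.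
move: nz; rewrite det_cons // mulf_eq0 (negbTE nzy) /= => nzr.
apply: le_trans (IH _ s (PK_cond hK nzy) nzr) (had_step _ hK nzy).
Qed.

Lemma ratio_mono (K : T -> T -> C) xs eta s : PK K -> \det (Kmx K xs) != 0 ->
  \det (Kmx K (xs ++ eta)) != 0 ->
  \det (Kmx K ((xs ++ eta) ++ s)) / \det (Kmx K (xs ++ eta))
    <= \det (Kmx K (xs ++ s)) / \det (Kmx K xs)
  /\ 0 <= \det (Kmx K (xs ++ s)) / \det (Kmx K xs).
Proof.
move=> hK n1 n2.
have [E1 [P1 R1]] := det_cat s hK n1.
have [E2 [P2 R2]] := det_cat s hK n2.
rewrite -R1 -R2; split; last exact: det_ge0.
have [E3 [P3 R3]] := det_cat eta hK n1.
have n3 : \det (Kmx (condL K xs) eta) != 0.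
  by move: n2; rewrite E3 mulf_eq0 negb_or => /andP [].
rewrite /condL foldl_cat -/(condL (condL K xs) eta).
exact: mono_cond.
Qed.

Lemma Qf_conj (K : T -> T -> C) s c : herm K -> (Qf K s c)^* = Qf K s c.
Proof.
move=> hK; rewrite /Qf cS exchange_big /=; apply: eq_bigr => i _.
rewrite cS; apply: eq_bigr => k _.
by rewrite !cM conjCK -hK [c i * _]mulrC.
Qed.
End Kern.

Lemma Re_sum (R : rcfType) (I : Type) (r : seq I) (F : I -> R[i]) :
  complex.Re (\sum_(i <- r) F i) = \sum_(i <- r) complex.Re (F i).
Proof.
elim: r => [|i r IH]; first by rewrite !big_nil.
by rewrite !big_cons -IH; case: (F i) => a b; case: (\sum_(j <- r) F j).
Qed.

Lemma ReM (R : rcfType) (x : R[i]) (a b : R) :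
  complex.Re (x * complex.Complex a b) = complex.Re x * a - complex.Im x * b.
Proof. by case: x. Qed.

Lemma pointwise_ge0 (R : realType) n (u : nat -> R) (c : nat -> R[i]) :
  0 <= \sum_(i < n) \sum_(k < n)
     (complex.Re ((c i)^* * c k) * cos (u i - u k) - complex.Im ((c i)^* * c k) * sin (u i - u k)).
Proof.
pose e i := complex.Complex (cos (u i)) (sin (u i)).
pose W := \sum_(i < n) (c i)^* * e i.
have Wc : W^* = \sum_(k < n) c k * (e k)^*.
  by rewrite /W cS; apply: eq_bigr => k _; rewrite cM conjCK.
have : 0 <= W * W^* by apply: mul_conjC_ge0.
rewrite lecE => /andP [_]; rewrite /= Wc /W mulr_suml Re_sum.
set L := (X in _ <= X -> _); set Rr := (X in _ -> _ <= X).
suff -> : L = Rr by [].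
rewrite /L /Rr; apply: eq_bigr => i _; rewrite mulr_sumr Re_sum.
apply: eq_bigr => k _.
have -> : (c i)^* * e i * (c k * (e k)^*) = ((c i)^* * c k) * (e i * (e k)^*) by ring.
have -> : e i * (e k)^* = complex.Complex (cos (u i - u k)) (sin (u i - u k)).
  by rewrite cosB sinB /e /=; congr complex.Complex; ring.
by rewrite ReM.
Qed.

Section B.
Variables (R : realType) (d : nat) (rho : {finite_measure set borelRd R d -> \bar R}).
Notation pt := 'rV[R]_d.
Notation BT := (borelRd R d).

Lemma cont_meas (g : pt -> R) : continuous g -> measurable_fun setT (g : BT -> R).
Proof.
move=> cg; apply: (measurability _ (RGenOpens.measurableE R)).
move=> _ [_ [a [b ->]] <-]; apply: sub_sigma_algebra.
rewrite setTI; apply: (continuousP g).1 => //; exact: interval_open.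
Qed.

Lemma meas_dot x : measurable_fun setT (fun t : BT => dotRd x t).
Proof.
rewrite /dotRd; apply: measurable_sum => i.
apply: measurable_funM; first exact: measurable_cst.
apply: cont_meas; exact: coord_continuous.
Qed.

Lemma int_bdd (f : BT -> R) M : measurable_fun setT f -> (forall t, `|f t| <= M) ->
  rho.-integrable setT (EFin \o f).
Proof.
move=> mf fM; apply: measurable_bounded_integrable => //.
  by rewrite -ge0_fin_numE ?measure_ge0 // fin_num_measure.
exists M; split; first by rewrite num_real.
move=> N MN t _; apply: le_trans (fM t) _; exact: ltW.
Qed.

Lemma Rint_sum (I : Type) (r : seq I) (F : I -> BT -> R) :
  (forall i, rho.-integrable setT (EFin \o F i)) ->
  rho.-integrable setT (EFin \o (fun t => \sum_(i <- r) F i t)) /\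
  Rintegral rho setT (fun t => \sum_(i <- r) F i t) = \sum_(i <- r) Rintegral rho setT (F i).
Proof.
move=> hF; elim: r => [|i r [IHi IHe]].
  have -> : (fun t => \sum_(i <- [::]) F i t) = fun _ => 0.
    by apply/funext => t; rewrite big_nil.
  rewrite big_nil; split; last by rewrite /Rintegral integral0.
  have -> : EFin \o (fun _ : BT => 0 : R) = cst 0%E by [].
  exact: integrable0.
have -> : (fun t => \sum_(j <- i :: r) F j t) = fun t => F i t + \sum_(j <- r) F j t.
  by apply/funext => t; rewrite big_cons.
split.
  have -> : EFin \o (fun t => F i t + \sum_(j <- r) F j t) =
     (EFin \o F i) \+ (EFin \o (fun t => \sum_(j <- r) F j t)) by [].
  exact: integrableD.
by rewrite RintegralD // big_cons IHe.
Qed.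

Lemma int_cos x : rho.-integrable setT (EFin \o (fun t : BT => cos (dotRd x t))).
Proof.
apply: (@int_bdd _ 1); last by move=> t; exact: cos_max.
apply: measurableT_comp (meas_dot x); apply: continuous_measurable_fun; exact: continuous_cos.
Qed.

Lemma int_sin x : rho.-integrable setT (EFin \o (fun t : BT => sin (dotRd x t))).
Proof.
apply: (@int_bdd _ 1); last by move=> t; exact: sin_max.
apply: measurableT_comp (meas_dot x); apply: continuous_measurable_fun; exact: continuous_sin.
Qed.

Lemma dotN (x t : pt) : dotRd (- x) t = - dotRd x t.
Proof. by rewrite /dotRd -sumrN; apply: eq_bigr => i _; rewrite mxE mulNr. Qed.

Lemma dotB (x y t : pt) : dotRd (x - y) t = dotRd x t - dotRd y t.
Proof. by rewrite /dotRd -sumrB; apply: eq_bigr => i _; rewrite !mxE mulrBl. Qed.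

Lemma jfun_herm (a b : pt) : jfun rho (b - a) = Num.conj (jfun rho (a - b)).
Proof.
have -> : b - a = - (a - b) by rewrite opprB.
rewrite /jfun; set x := a - b.
have E1 : Rintegral rho setT (fun t : BT => cos (dotRd (- x) t)) =
          Rintegral rho setT (fun t : BT => cos (dotRd x t)).
  by apply: eq_Rintegral => t _; rewrite dotN cosN.
have E2 : Rintegral rho setT (fun t : BT => sin (dotRd (- x) t)) =
          - Rintegral rho setT (fun t : BT => sin (dotRd x t)).
  rewrite -mulN1r -RintegralZl //; last exact: int_sin.
  by apply: eq_Rintegral => t _; rewrite dotN sinN mulN1r.
rewrite E1 E2 mulrN.
by [].
Qed.

Lemma int_scos a x : rho.-integrable setT (EFin \o (fun t : BT => a * cos (dotRd x t))).
Proof.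
apply: (@int_bdd _ `|a|).
  apply: measurable_funM; first exact: measurable_cst.
  apply: measurableT_comp (meas_dot x); apply: continuous_measurable_fun; exact: continuous_cos.
by move=> t; rewrite normrM ler_piMr // cos_max.
Qed.

Lemma int_ssin a x : rho.-integrable setT (EFin \o (fun t : BT => a * sin (dotRd x t))).
Proof.
apply: (@int_bdd _ `|a|).
  apply: measurable_funM; first exact: measurable_cst.
  apply: measurableT_comp (meas_dot x); apply: continuous_measurable_fun; exact: continuous_sin.
by move=> t; rewrite normrM ler_piMr // sin_max.
Qed.

Lemma int_G a b x :
  rho.-integrable setT (EFin \o (fun t : BT => a * cos (dotRd x t) - b * sin (dotRd x t))) /\
  Rintegral rho setT (fun t : BT => a * cos (dotRd x t) - b * sin (dotRd x t)) =
  a * Rintegral rho setT (fun t : BT => cos (dotRd x t)) -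
  b * Rintegral rho setT (fun t : BT => sin (dotRd x t)).
Proof.
split.
  pose f1 := EFin \o (fun t : BT => a * cos (dotRd x t)).
  pose f2 := EFin \o (fun t : BT => b * sin (dotRd x t)).
  have -> : EFin \o (fun t : BT => a * cos (dotRd x t) - b * sin (dotRd x t)) = (f1 \- f2)%E.
    by apply/funext => t; rewrite /f1 /f2 /= EFinB.
  apply: integrableB => //; [exact: int_scos | exact: int_ssin].
rewrite RintegralB //; [|exact: int_scos | exact: int_ssin].
by rewrite !RintegralZl //; [exact: int_sin | exact: int_cos].
Qed.

Lemma jfun_PK : PK 0 (fun a b : pt => jfun rho (a - b)).
Proof.
set K := (fun a b : pt => jfun rho (a - b)).
have hK : herm K by move=> a b; exact: jfun_herm.
split => // s c.
have hc := @Qf_conj _ _ 0 K s c hK.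
rewrite lecE; apply/andP; split.
  move: hc; case: (Qf 0 K s c) => a b /(congr1 (@complex.Im R)) /= hb.
  apply/eqP; lra.
rewrite /Qf Re_sum.
under eq_bigr => i _ do rewrite Re_sum.
under eq_bigr => i _ do under eq_bigr => k _ do rewrite /K /jfun ReM.
set kap := (2 * pi) ^- d.
pose x (i k : 'I_(size s)) := nth 0 s i - nth 0 s k.
pose G (i k : 'I_(size s)) (t : BT) :=
  complex.Re ((c i)^* * c k) * cos (dotRd (x i k) t) - complex.Im ((c i)^* * c k) * sin (dotRd (x i k) t).
have Gi : forall i k, rho.-integrable setT (EFin \o G i k).
  by move=> i k; exact: (int_G _ _ _).1.
have Gs : forall i, rho.-integrable setT (EFin \o (fun t => \sum_(k < size s) G i k t)).
  by move=> i; exact: (Rint_sum _ (Gi i)).1.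
have -> : \sum_(i < size s) \sum_(k < size s)
   (complex.Re ((c i)^* * c k) * (kap * Rintegral rho setT (fun t : BT => cos (dotRd (nth 0 s i - nth 0 s k) t))) -
    complex.Im ((c i)^* * c k) * (kap * Rintegral rho setT (fun t : BT => sin (dotRd (nth 0 s i - nth 0 s k) t))))
  = kap * Rintegral rho setT (fun t => \sum_(i < size s) \sum_(k < size s) G i k t).
  rewrite (Rint_sum _ Gs).2 mulr_sumr; apply: eq_bigr => i _.
  rewrite (Rint_sum _ (Gi i)).2 mulr_sumr; apply: eq_bigr => k _.
  rewrite (int_G _ _ _).2; ring.
apply: mulr_ge0.
  by rewrite /kap invr_ge0 exprn_ge0 // mulr_ge0 // pi_ge0.
apply: Rintegral_ge0 => t _.
have := pointwise_ge0 (size s) (fun i => dotRd (nth 0 s i) t) c.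
by under eq_bigr => i _ do under eq_bigr => k _ do rewrite -dotB.
Qed.
End B.

Section C.
Variables (R : realType) (d : nat) (rho : {finite_measure set borelRd R d -> \bar R}).
Notation pt := 'rV[R]_d.
Let K := fun a b : pt => jfun rho (a - b).
Let del (s : seq pt) := \det (Kmx 0 K s).
Let rr (s : seq pt) := complex.Re (del s).

Definition Phi (x : R) : \bar R := if 0 < x then (- ln x)%:E else +oo%E.

Lemma hK : PK 0 K.
Proof. exact: jfun_PK. Qed.

Lemma delta_real s : del s = ((rr s)%:C)%C /\ 0 <= rr s.
Proof.
have := det_ge0 s hK; rewrite /rr -/(del s).
by case: (del s) => a b; rewrite lecE /= => /andP [/eqP -> h].
Qed.

Lemma Upot_eq s : Upot (jfun rho) s = Phi (rr s).
Proof. by []. Qed.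

Lemma Phi_anti x y : 0 <= y -> y <= x -> (Phi x <= Phi y)%E.
Proof.
rewrite /Phi => y0 yx; case: (ifPn (0 < y)) => y0'; last by rewrite leey.
have x0 : 0 < x by apply: lt_le_trans y0' yx.
by rewrite x0 lee_fin lerN2 ler_ln // posrE.
Qed.

Lemma ratio (zeta xs xs' eta : seq pt) : perm_eq xs' (xs ++ eta) -> del xs != 0 -> del xs' != 0 ->
  rr (zeta ++ xs') / rr xs' <= rr (zeta ++ xs) / rr xs /\ 0 <= rr (zeta ++ xs) / rr xs.
Proof.
move=> pe n1 n2.
have e1 : del xs' = del (xs ++ eta) by apply: det_perm_eq.
have e2 : del (zeta ++ xs') = del ((xs ++ eta) ++ zeta).
  by apply: det_perm_eq; rewrite (perm_catC zeta xs') perm_cat2r.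
have e3 : del (zeta ++ xs) = del (xs ++ zeta).
  by apply: det_perm_eq; rewrite (perm_catC zeta xs).
have n2' : del (xs ++ eta) != 0 by rewrite -e1.
have [h1_ h2_] := ratio_mono zeta hK n1 n2'.
have h1' : del ((xs ++ eta) ++ zeta) / del (xs ++ eta) <= del (xs ++ zeta) / del xs := h1_.
have h2' : 0 <= del (xs ++ zeta) / del xs := h2_.
move: h1' h2'; rewrite -e1 -e2 -e3 => h1 h2.
rewrite /rr in h1 h2 *.
move: h1 h2; rewrite (delta_real (zeta ++ xs')).1 (delta_real xs').1 (delta_real (zeta ++ xs)).1 (delta_real xs).1.
rewrite -!fmorph_div lecR ler0c /=.
by [].
Qed.

Lemma rr_pos s : del s != 0 -> 0 < rr s.
Proof.
move=> n; have [e h] := delta_real s; rewrite lt_neqAle h andbT.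
by apply: contra n => /eqP r0; rewrite e -r0.
Qed.

Lemma rr0 : rr [::] = 1.
Proof. by rewrite /rr /del Kmx0. Qed.

Lemma Phi_ninfty x : Phi x != -oo%E.
Proof. by rewrite /Phi; case: ifP. Qed.

Lemma f_eq zeta xs : del xs != 0 ->
  (Upot (jfun rho) zeta + Wpot (jfun rho) zeta xs)%E = Phi (rr (zeta ++ xs) / rr xs).
Proof.
move=> n; have c0 := rr_pos n.
have n0 : del [::] != 0 by rewrite /del Kmx0 oner_eq0.
have [hle _] := @ratio zeta [::] xs xs (perm_refl xs) n0 n.
rewrite cats0 rr0 divr1 in hle.
have b0 := (delta_real (zeta ++ xs)).2.
rewrite /Wpot !Upot_eq.
have [hb|hb] := boolP (0 < rr (zeta ++ xs)).
  have q0 : 0 < rr (zeta ++ xs) / rr xs by apply: divr_gt0.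
  have a0 : 0 < rr zeta by apply: lt_le_trans hle.
  rewrite /Phi hb a0 q0 c0 ltry -!EFinB -EFinD; congr EFin.
  rewrite ln_div ?posrE //; ring.
have b00 : rr (zeta ++ xs) = 0 by apply/eqP; rewrite eq_le b0 andbT leNgt.
rewrite b00 mul0r [in X in (_ + X)%E]/Phi [in X in _ = X]/Phi ltxx ltxx addey //.
exact: Phi_ninfty.
Qed.

Lemma mono_cvg (Lam : set pt) (f : set pt -> \bar R) :
  bounded_set Lam -> borel_set Lam ->
  (forall D D', bounded_set D -> borel_set D -> Lam `<=` D ->
     bounded_set D' -> borel_set D' -> D `<=` D' -> (f D <= f D')%E) ->
  f @ exhaust_filter Lam --> ereal_sup [set f D | D in [set D | bounded_set D /\ borel_set D /\ Lam `<=` D]].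
Proof.
move=> bL brL mono P /= nP.
set S := [set D | bounded_set D /\ borel_set D /\ Lam `<=` D] in nP *.
have SL : S Lam by split => //; split.
have key : forall D0, S D0 -> (forall D, S D -> D0 `<=` D -> P (f D)) ->
    nbhs (f x @[x --> exhaust_filter Lam]) P.
  move=> D0 SD0 H; exists D0 => // D [bD [brD sD]]; apply: H => //.
  by split => //; split => //; apply: subset_trans sD; case: SD0 => _ [].
have monoS : forall D0 D, S D0 -> S D -> D0 `<=` D -> (f D0 <= f D)%E.
  by move=> D0 D [b0 [r0 l0]] [b1 [r1 _]] sub; apply: mono.
have ub : forall D, S D -> (f D <= ereal_sup (f @` S))%E.
  by move=> D SD; apply: ereal_sup_ubound; exists D.
have sgt : forall x, (x < ereal_sup (f @` S))%E -> exists2 D, S D & (x < f D)%E.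
  by move=> x /ereal_sup_gt [_ [D SD <-] h]; exists D.
move: ub sgt nP; case: (ereal_sup (f @` S)) => [r| |] ub sgt nP.
- move: nP => /= /nbhs_normP [e e0 he].
  have [D0 SD0 h0] := sgt ((r - e)%:E) ltac:(by rewrite lte_fin ltrBlDr ltrDl).
  apply: (key D0 SD0) => D SD sub.
  have h1 := lt_le_trans h0 (monoS _ _ SD0 SD sub).
  have h2 := ub D SD.
  move: h1 h2; case: (f D) => [v| |] //= h1 h2.
  apply: he; rewrite /ball_ /=.
  rewrite lte_fin in h1; rewrite lee_fin in h2.
  by rewrite ger0_norm ?subr_ge0 // ltrBlDr -ltrBlDl.
- move: nP => /= [M [Mr hM]].
  have [D0 SD0 h0] := sgt (M%:E) (ltry M).
  apply: (key D0 SD0) => D SD sub; apply: hM.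
  exact: lt_le_trans h0 (monoS _ _ SD0 SD sub).
- move: nP => /= [M [Mr hM]].
  apply: (key Lam SL) => D SD _; apply: hM.
  by have := ub D SD; rewrite leeNy_eq => /eqP ->; apply: ltNyr.
Qed.

Lemma bd_supp (j : pt -> R[i]) Lam xi : boundary j Lam xi `<=` supp xi.
Proof.
move=> x; rewrite /boundary; case: ifP => _; first by case.
move=> [y0 [s [_ sn al <- _]]].
case: s sn al => // h t _ /allP al.
have := al (last h t) (mem_last h t).
by rewrite in_setE => -[].
Qed.

Lemma bounded_sub (A B : set pt) : A `<=` B -> bounded_set B -> bounded_set A.
Proof.
move=> AB bB; rewrite /bounded_set /=.
move: bB => /= bB; apply: filterS bB => M h x Ax; exact: h (AB _ Ax).
Qed.


End C.

Module HatPerm.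
Import finmap.
Lemma hat_perm (R : realType) (d : nat) (j : 'rV[R]_d -> R[i]) (Lam : set 'rV[R]_d) xi (D D' : set 'rV[R]_d) : finite_set (D' `&` boundary j Lam xi) -> D `<=` D' ->
  exists eta, perm_eq (hat_xi j Lam xi D') (hat_xi j Lam xi D ++ eta).
Proof.
move=> fD' sub.
have fD : finite_set (D `&` boundary j Lam xi).
  by apply: sub_finite_set fD' => x [Dx bx]; split => //; exact: sub.
rewrite /hat_xi.
set e := finmap.enum_fset (fset_set (D `&` boundary j Lam xi)).
set e' := finmap.enum_fset (fset_set (D' `&` boundary j Lam xi)).
have ue : uniq e by apply: finmap.fset_uniq.
have ue' : uniq e' by apply: finmap.fset_uniq.
have se : {subset e <= e'}.
  move=> x xe.
  have : x \in fset_set (D `&` boundary j Lam xi) := xe.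
  rewrite in_fset_set // in_setE => -[Dx bx].
  have : x \in fset_set (D' `&` boundary j Lam xi).
    by rewrite in_fset_set // in_setE; split => //; exact: sub.
  by [].
pose N := fun x : 'rV[R]_d => nseq (xi x) x.
exists (flatten (map N [seq x <- e' | x \notin e])).
have p1 : perm_eq e' ([seq x <- e' | x \in e] ++ [seq x <- e' | x \notin e]).
  by rewrite perm_sym; apply/permPl; exact: (perm_filterC (mem e) e').
have p2 : perm_eq [seq x <- e' | x \in e] e.
  apply: uniq_perm => //; first exact: filter_uniq.
  by move=> x; rewrite mem_filter; case: (boolP (x \in e)) => // /se ->.
apply: perm_trans (perm_flatten (perm_map N p1)) _.
by rewrite map_cat flatten_cat perm_cat2r; apply: perm_flatten; apply: perm_map.
Qed.
End HatPerm.
Import HatPerm.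


Theorem lemma3p2 (R : realType) (d : nat)
  (rho : {finite_measure set borelRd R d -> \bar R})
  (Lam : set 'rV[R]_d) (zeta : seq 'rV[R]_d) (xi : 'rV[R]_d -> nat) :
  (0 < d)%N ->
  L1_Rd (jfun rho) ->
  bounded_set Lam -> borel_set Lam ->
  uniq zeta -> {subset zeta <= Lam} ->
  possible_bc (jfun rho) Lam xi ->
  exists L : \bar R, L != -oo%E /\
    ((fun Del => (Upot (jfun rho) zeta
                  + Wpot (jfun rho) zeta (hat_xi (jfun rho) Lam xi (Del `\` Lam)))%E)
       @ exhaust_filter Lam --> L).
Proof.
move=> d0 L1 bL brL uz zL [lf pbc].
set f := (fun Del : set 'rV[R]_d => _ : \bar R).
set K := fun a b : 'rV[R]_d => jfun rho (a - b).
pose xs D := hat_xi (jfun rho) Lam xi (D `\` Lam).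
have xiD : forall D, bounded_set D -> \det (Kmx 0 K (xs D)) != 0.
  move=> D bD; apply: pbc; last by move=> x [].
  by apply: bounded_sub bD => x [].
pose g D := complex.Re (\det (Kmx 0 K (zeta ++ xs D))) / complex.Re (\det (Kmx 0 K (xs D))).
have fE : forall D, bounded_set D -> f D = Phi (g D).
  by move=> D bD; rewrite /f f_eq //; exact: xiD.
have mono : forall D D', bounded_set D -> borel_set D -> Lam `<=` D ->
     bounded_set D' -> borel_set D' -> D `<=` D' -> (f D <= f D')%E.
  move=> D D' bD _ _ bD' _ sub.
  rewrite !fE //.
  have fin : finite_set ((D' `\` Lam) `&` boundary (jfun rho) Lam xi).
    apply: sub_finite_set (lf _ (bounded_sub (fun x (h : (D' `\` Lam) x) => h.1) bD')).
    by move=> x [h1 h2]; split => //; exact: bd_supp h2.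
  have [eta pe] := hat_perm fin (fun x (h : (D `\` Lam) x) => conj (sub _ h.1) h.2).
  have [h1 _] := ratio zeta pe (xiD D bD) (xiD D' bD').
  apply: Phi_anti h1.
  have pe0 : perm_eq (xs D') (xs D' ++ [::]) by rewrite cats0.
  exact: (ratio zeta pe0 (xiD D' bD') (xiD D' bD')).2.
exists (ereal_sup [set f D | D in [set D | bounded_set D /\ borel_set D /\ Lam `<=` D]]).
split; last exact: mono_cvg.
have : (f Lam <= ereal_sup [set f D | D in [set D | bounded_set D /\ borel_set D /\ Lam `<=` D]])%E.
  by apply: ereal_sup_ubound; exists Lam => //; split => //; split.
apply: contraTN => /eqP ->; rewrite leeNy_eq fE //; exact: Phi_ninfty.
Qed.
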